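(* Let $A=K[X_1,\ldots,X_n]$ over a field $K$, and let $I,J\subseteq A$ be homogeneous ideals with canonical universal Gr\''obner bases $G_1$ and $G_2$ respectively. If $\operatorname{supp}(G_1)=\operatorname{supp}(G_2)$, then $\operatorname{Gf}(I)=\operatorname{Gf}(J)$; that is, for all weights $\omega,\omega'\in\mathbb R^n$ one has $\operatorname{in}_\omega(I)=\operatorname{in}_{\omega'}(I)$ if and only if $\operatorname{in}_\omega(J)=\operatorname{in}_{\omega'}(J)$.
   Context: For a nonzero polynomial $f$, $\operatorname{supp}(f)$ is the set of monomials appearing in $f$ with nonzero coefficient; for a set $G$ of polynomials, $\operatorname{supp}(G)=\{\operatorname{supp}(f):f\in G, f\ne 0\}$. The canonical universal Gr\''obner basis of a homogeneous ideal is the union of its reduced Gr\''obner bases with respect to all monomial orders (a finite set). For $\omega\in\mathbb R^n$, $\operatorname{in}_\omega(f)$ is the sum of the terms of $f$ whose exponent vector $\mathbf a$ maximizes $\omega\cdot\mathbf a$, and $\operatorname{in}_\omega(I)$ is the ideal generated by all $\operatorname{in}_\omega(f)$, $f\in I$. The Gr\''obner fan $\operatorname{Gf}(I)$ is the fan consisting of the closures (in the Euclidean topology) of the equivalence classes of the relation on $\mathbb R^n$: $\omega\sim\omega'$ iff $\operatorname{in}_\omega(I)=\operatorname{in}_{\omega'}(I)$. *)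

(* Defs.v *)
From HB Require Import structures.
From mathcomp Require Import all_boot all_order all_algebra.
From mathcomp Require Import reals.
From mathcomp Require Import mpoly.
Set Implicit Arguments. Unset Strict Implicit. Unset Printing Implicit Defensive.
Import Order.TTheory GRing.Theory Num.Theory.
Local Open Scope ring_scope.

Section GroebnerDefs.
Variables (n : nat) (K : fieldType).
Local Notation A := {mpoly K[n]}.
Local Notation mon := 'X_{1..n}.

Definition is_ideal (I : A -> Prop) : Prop :=
  [/\ I 0, (forall f g, I f -> I g -> I (f + g)) & (forall r f, I f -> I (r * f))].

Definition hcomp (d : nat) (f : A) : A :=
  \sum_(m <- msupp f | mdeg m == d) f@_m *: 'X_[m].

Definition is_homogeneous_ideal (I : A -> Prop) : Prop :=
  is_ideal I /\ forall f d, I f -> I (hcomp d f).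

Definition ideal_gen (S : A -> Prop) : A -> Prop :=
  fun p => exists s : seq (A * A),
    (forall x, x \in s -> S x.2) /\ p = \sum_(x <- s) x.1 * x.2.

Definition same_set (S T : A -> Prop) : Prop := forall p, S p <-> T p.

Definition monomial_order (ord : rel mon) : Prop :=
  [/\ reflexive ord, antisymmetric ord, transitive ord & total ord] /\
  (forall m1 m2 m, ord m1 m2 -> ord (m1 + m)%MM (m2 + m)%MM) /\
  well_founded (fun a b => (a != b) && ord a b).

Definition is_LM (ord : rel mon) (f : A) (m : mon) : Prop :=
  m \in msupp f /\ forall m', m' \in msupp f -> ord m' m.

Definition init_ideal_ord (ord : rel mon) (I : A -> Prop) : A -> Prop :=
  ideal_gen (fun p => exists f m, [/\ I f, f != 0, is_LM ord f m & p = 'X_[m]]).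

Definition is_groebner (ord : rel mon) (I : A -> Prop) (G : seq A) : Prop :=
  (forall g, g \in G -> I g) /\
  same_set (init_ideal_ord ord I)
    (ideal_gen (fun p => exists g m, [/\ g \in G, g != 0, is_LM ord g m & p = 'X_[m]])).

Definition mdivides (m1 m2 : mon) : bool := [forall i, m1 i <= m2 i]%N.

Definition is_reduced_groebner (ord : rel mon) (I : A -> Prop) (G : seq A) : Prop :=
  [/\ is_groebner ord I G,
      (forall g, g \in G -> exists m, is_LM ord g m /\ g@_m = 1)
    & (forall g g' m m', g \in G -> g' \in G -> g != g' ->
         is_LM ord g' m' -> m \in msupp g -> ~~ mdivides m' m)].

Definition in_cUGB (I : A -> Prop) (f : A) : Prop :=
  exists ord G, [/\ monomial_order ord, is_reduced_groebner ord I G & f \in G].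

Definition same_supports (G1 G2 : A -> Prop) : Prop :=
  (forall f, G1 f -> f != 0 -> exists g, [/\ G2 g, g != 0 & msupp g =i msupp f]) /\
  (forall g, G2 g -> g != 0 -> exists f, [/\ G1 f, f != 0 & msupp f =i msupp g]).

End GroebnerDefs.

Section WeightDefs.
Variables (n : nat) (K : fieldType) (R : realType).
Local Notation A := {mpoly K[n]}.

Definition wdot (w : 'I_n -> R) (m : 'X_{1..n}) : R := \sum_(i < n) w i * (m i)%:R.

Definition init_w (w : 'I_n -> R) (f : A) : A :=
  \sum_(m <- msupp f | all (fun m' => wdot w m' <= wdot w m) (msupp f)) f@_m *: 'X_[m].

Definition init_ideal_w (w : 'I_n -> R) (I : A -> Prop) : A -> Prop :=
  ideal_gen (fun p => exists f, I f /\ p = init_w w f).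

End WeightDefs.

(* Main.v *)
Require Import Defs.
From HB Require Import structures.
From mathcomp Require Import all_boot all_order all_algebra.
From mathcomp Require Import reals.
From mathcomp Require Import mpoly.
Set Implicit Arguments. Unset Strict Implicit. Unset Printing Implicit Defensive.
Import Order.TTheory GRing.Theory Num.Theory.
Local Open Scope ring_scope.
Section Basics.
Variables (n : nat) (K : fieldType).
Local Notation A := {mpoly K[n]}.
Local Notation mon := 'X_{1..n}.

Definition filt (P : pred mon) (f : A) : A :=
  \sum_(m <- msupp f | P m) f@_m *: 'X_[m].

Lemma filtE P f m : (filt P f)@_m = if P m then f@_m else 0.
Proof.
rewrite /filt raddf_sum /=.
under eq_bigr do rewrite mcoeffZ mcoeffX.
rewrite -big_filter.
case: (boolP (m \in [seq x <- msupp f | P x])) => Hm.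
- rewrite (bigD1_seq m) ?filter_uniq ?msupp_uniq //= eqxx mulr1 big1 ?addr0.
  + by move: Hm; rewrite mem_filter => /andP [->].
  + by move=> i /negbTE Hi; rewrite Hi mulr0.
- rewrite big1_seq.
  + move: Hm; rewrite mem_filter negb_and; case: (P m) => //= H.
    by rewrite memN_msupp_eq0.
  + move=> i /andP [_ Hi]; case: eqP => [Ei|]; last by rewrite mulr0.
    by move: Hm; rewrite -Ei Hi.
Qed.

Lemma eq_filt_P (P Q : pred mon) f : P =1 Q -> filt P f = filt Q f.
Proof. by move=> E; apply/mpolyP => m; rewrite !filtE E. Qed.

Lemma hcompE d (f : A) m : (hcomp d f)@_m = if mdeg m == d then f@_m else 0.
Proof. exact: (filtE (fun m => mdeg m == d)). Qed.

Lemma filtD P f g : filt P (f + g) = filt P f + filt P g.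
Proof. by apply/mpolyP => m; rewrite mcoeffD !filtE mcoeffD; case: (P m); rewrite ?addr0. Qed.

Lemma filtZ P c f : filt P (c *: f) = c *: filt P f.
Proof. by apply/mpolyP => m; rewrite mcoeffZ !filtE mcoeffZ; case: (P m); rewrite ?mulr0. Qed.

Lemma filt0 P : filt P 0 = 0.
Proof. by apply/mpolyP => m; rewrite filtE mcoeff0; case: (P m). Qed.

Lemma filtB P f g : filt P (f - g) = filt P f - filt P g.
Proof. by apply/mpolyP => m; rewrite mcoeffB !filtE mcoeffB; case: (P m); rewrite ?subr0. Qed.

Lemma filt_sum P (T : Type) (r : seq T) (F : T -> A) :
  filt P (\sum_(x <- r) F x) = \sum_(x <- r) filt P (F x).
Proof.
elim: r => [|x r IH]; first by rewrite !big_nil filt0.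
by rewrite !big_cons filtD IH.
Qed.

Lemma msupp_filt P f m : m \in msupp (filt P f) = P m && (m \in msupp f).
Proof. by rewrite !mcoeff_msupp filtE; case: (P m); rewrite ?eqxx. Qed.

Lemma ideal_gen_ideal (S : A -> Prop) : is_ideal (ideal_gen S).
Proof.
split.
- by exists [::]; split => //; rewrite big_nil.
- move=> f g [s [Hs ->]] [t [Ht ->]]; exists (s ++ t); split; last by rewrite big_cat.
  by move=> x; rewrite mem_cat => /orP [/Hs|/Ht].
- move=> r f [s [Hs ->]]; exists [seq (r * x.1, x.2) | x <- s]; split.
  + by move=> x /mapP [y /Hs Hy ->].
  + by rewrite big_map mulr_sumr; apply: eq_bigr => x _; rewrite mulrA.
Qed.

Lemma ideal_gen_sub (S : A -> Prop) p : S p -> ideal_gen S p.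
Proof.
by move=> Hp; exists [:: (1, p)]; split; [move=> x; rewrite inE => /eqP -> | rewrite big_seq1 mul1r].
Qed.

Lemma ideal_gen_mul (S : A -> Prop) r p : S p -> ideal_gen S (r * p).
Proof. by move=> Hp; case: (ideal_gen_ideal S) => _ _ HM; apply: HM; apply: ideal_gen_sub. Qed.

Lemma ideal_sum (I : A -> Prop) (T : eqType) (r : seq T) (F : T -> A) :
  is_ideal I -> (forall x, x \in r -> I (F x)) -> I (\sum_(x <- r) F x).
Proof.
move=> [H0 HD HM]; elim: r => [|x r IH] H; first by rewrite big_nil.
rewrite big_cons; apply: HD; first by apply: H; rewrite inE eqxx.
by apply: IH => y Hy; apply: H; rewrite inE Hy orbT.
Qed.

Lemma ideal_gen_min (S T : A -> Prop) :
  is_ideal T -> (forall p, S p -> T p) -> forall p, ideal_gen S p -> T p.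
Proof.
move=> HT HST p [s [Hs ->]]; apply: ideal_sum => // x /Hs /HST.
by case: HT => _ _; apply.
Qed.

Lemma idealN (I : A -> Prop) f : is_ideal I -> I f -> I (- f).
Proof. by case=> _ _ HM Hf; rewrite -mulN1r; apply: HM. Qed.

Lemma idealB (I : A -> Prop) f g : is_ideal I -> I f -> I g -> I (f - g).
Proof. by move=> HI Hf Hg; case: (HI) => _ HD _; apply: HD => //; apply: idealN. Qed.

Lemma idealZ (I : A -> Prop) c f : is_ideal I -> I f -> I (c *: f).
Proof. by case=> _ _ HM Hf; rewrite -mul_mpolyC; apply: HM. Qed.

End Basics.
From Stdlib Require Import Classical.

Section Orders.
Variables (n : nat) (K : fieldType).
Local Notation A := {mpoly K[n]}.
Local Notation mon := 'X_{1..n}.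
Variable ord : rel mon.
Hypothesis Hord : monomial_order ord.

Lemma ord_refl : reflexive ord. Proof. by case: Hord => -[]. Qed.
Lemma ord_anti : antisymmetric ord. Proof. by case: Hord => -[]. Qed.
Lemma ord_trans : transitive ord. Proof. by case: Hord => -[]. Qed.
Lemma ord_total : total ord. Proof. by case: Hord => -[]. Qed.
Lemma ord_add m1 m2 m : ord m1 m2 -> ord (m1 + m)%MM (m2 + m)%MM.
Proof. by case: Hord => _ [H _]; apply: H. Qed.
Lemma ord_wf : well_founded (fun a b => (a != b) && ord a b).
Proof. by case: Hord => _ [_ H]. Qed.

Lemma ord_addl m1 m2 m : ord m1 m2 -> ord (m + m1)%MM (m + m2)%MM.
Proof. by rewrite ![(m + _)%MM]addmC; apply: ord_add. Qed.

Lemma ord0 k : ord 0%MM k.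
Proof.
case: (orP (ord_total 0%MM k)) => // Hk0.
case: (eqVneq k 0%MM) => [->|Hk]; first exact: ord_refl.
exfalso.
have H : forall x, Acc (fun a b => (a != b) && ord a b) x ->
    forall j, x = (k *+ j)%MM -> False.
  move=> x; elim => {}x _ IH j Ex; apply: (IH (k *+ j.+1)%MM) _ j.+1 (erefl _).
  rewrite Ex mulmS; apply/andP; split.
  - apply/negP => /eqP E; move: E; rewrite -{2}[(k *+ j)%MM]add0m => /addIm E.
    by move: Hk; rewrite E eqxx.
  - by rewrite -{2}[(k *+ j)%MM]add0m; apply: ord_add.
by apply: (H _ (ord_wf (k *+ 0)%MM) 0).
Qed.

Lemma ord_div a b : (a <= b)%MM -> ord a b.
Proof.
move=> H; rewrite -(submK H) -{1}[a]add0m; apply: ord_add; exact: ord0.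
Qed.

Lemma mdividesP (a b : mon) : reflect (a <= b)%MM (mdivides a b).
Proof.
apply: (iffP forallP) => [H|/mnm_lepP H i]; last exact: H.
by apply/mnm_lepP.
Qed.

Lemma seq_max (s : seq mon) : s != [::] -> exists2 m, m \in s & forall m', m' \in s -> ord m' m.
Proof.
elim: s => [//|x s IH] _.
case: (eqVneq s [::]) => [->|Hs].
  by exists x; rewrite ?inE // => m'; rewrite inE => /eqP ->; exact: ord_refl.
have [m Hm Hmax] := IH Hs.
case: (orP (ord_total x m)) => Hxm.
- exists m; first by rewrite inE Hm orbT.
  by move=> m'; rewrite inE => /orP [/eqP ->|/Hmax].
- exists x; first by rewrite inE eqxx.
  move=> m'; rewrite inE => /orP [/eqP ->|/Hmax H]; first exact: ord_refl.
  exact: ord_trans H Hxm.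
Qed.

Lemma LM_exists (f : A) : f != 0 -> exists m, is_LM ord f m.
Proof.
move=> Hf; have [|m Hm Hmax] := @seq_max (msupp f); first by rewrite msupp_eq0.
by exists m; split.
Qed.

Lemma LM_uniq (f : A) m1 m2 : is_LM ord f m1 -> is_LM ord f m2 -> m1 = m2.
Proof.
move=> [H1 M1] [H2 M2]; apply: ord_anti; rewrite (M2 _ H1); exact: M1.
Qed.

Lemma LM_coef (f : A) m : is_LM ord f m -> f@_m != 0.
Proof. by case=> H _; rewrite -mcoeff_msupp. Qed.

Lemma LM_supp (f g : A) m : msupp f =i msupp g -> is_LM ord f m -> is_LM ord g m.
Proof. by move=> E [H1 H2]; split; [rewrite -E | move=> m'; rewrite -E; apply: H2]. Qed.

Lemma LM_MX (f : A) m a : is_LM ord f m -> is_LM ord (f * 'X_[a]) (a + m)%MM.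
Proof.
move=> [H1 H2]; split.
- by rewrite (perm_mem (msuppMX _ _)); apply/mapP; exists m.
- move=> m'; rewrite (perm_mem (msuppMX _ _)) => /mapP [m0 Hm0 ->].
  by apply: ord_addl; apply: H2.
Qed.

Lemma LM_Z (f : A) m c : c != 0 -> is_LM ord f m -> is_LM ord (c *: f) m.
Proof. by move=> Hc; apply: LM_supp => x; rewrite (perm_mem (msuppZ _ Hc)). Qed.

Definition LMset (I : A -> Prop) (mu : mon) : Prop :=
  exists f, [/\ I f, f != 0 & is_LM ord f mu].

Lemma LMset_mul (I : A -> Prop) nu mu : is_ideal I -> LMset I nu -> (nu <= mu)%MM -> LMset I mu.
Proof.
move=> [_ _ HM] [f [Hf Hf0 HL]] Hd.
exists (f * 'X_[mu - nu]); split.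
- by rewrite mulrC; apply: HM.
- apply/eqP => E; have := LM_coef (@LM_MX _ _ (mu - nu) HL).
  by rewrite E mcoeff0 eqxx.
- by rewrite -{2}(submK Hd); apply: LM_MX.
Qed.

End Orders.
Section Dickson.
Variable n : nat.
Local Notation mon := 'X_{1..n}.

Definition domk k (nu mu : mon) := forall i : 'I_n, (i < k)%N -> (nu i <= mu i)%N.

Lemma dickson_k k (P : mon -> Prop) :
  exists s : seq mon, (forall x, x \in s -> P x) /\
    forall mu, P mu -> exists2 nu, nu \in s & domk k nu mu.
Proof.
elim: k P => [|k IH] P.
  case: (classic (exists mu, P mu)) => [[mu Hmu]|Hno].
  - exists [:: mu]; split; first by move=> x; rewrite inE => /eqP ->.
    by move=> nu _; exists mu; rewrite ?inE //.
  - exists [::]; split => // mu Hmu; exfalso; apply: Hno; by exists mu.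
have [s [Hs Hdom]] := IH P.
case: (ltnP k n) => Hkn; last first.
  exists s; split => // mu /Hdom [nu Hnu Hd]; exists nu => // i Hi.
  by apply: Hd; apply: leq_trans (ltn_ord i) Hkn.
pose kk := Ordinal Hkn.
pose B := \max_(nu <- s) nu kk.
have C : forall B', exists t : seq mon, (forall x, x \in t -> P x) /\
    forall mu, P mu -> (mu kk < B')%N -> exists2 nu, nu \in t & domk k.+1 nu mu.
  elim=> [|B' [t [Ht Htd]]]; first by exists [::]; split.
  have [u [Hu Hud]] := IH (fun mu => P mu /\ mu kk = B').
  exists (t ++ u); split.
    by move=> x; rewrite mem_cat => /orP [/Ht|/Hu []].
  move=> mu Hmu; rewrite ltnS leq_eqVlt => /orP [/eqP E|Hlt]; last first.
    by have [nu Hnu Hd] := Htd mu Hmu Hlt; exists nu => //; rewrite mem_cat Hnu.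
  have [nu Hnu Hd] := Hud mu (conj Hmu E).
  exists nu; first by rewrite mem_cat Hnu orbT.
  move=> i; rewrite ltnS leq_eqVlt => /orP [/eqP Ei|Hi]; last exact: Hd.
  have -> : i = kk by apply: val_inj.
  by have [_ ->] := Hu _ Hnu; rewrite E.
have [t [Ht Htd]] := C B.
exists (s ++ t); split.
  by move=> x; rewrite mem_cat => /orP [/Hs|/Ht].
move=> mu Hmu; case: (ltnP (mu kk) B) => HB.
  by have [nu Hnu Hd] := Htd mu Hmu HB; exists nu => //; rewrite mem_cat Hnu orbT.
have [nu Hnu Hd] := Hdom mu Hmu.
exists nu; first by rewrite mem_cat Hnu.
move=> i; rewrite ltnS leq_eqVlt => /orP [/eqP Ei|Hi]; last exact: Hd.
have -> : i = kk by apply: val_inj.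
apply: leq_trans HB; rewrite /B; exact: (@leq_bigmax_seq _ s xpredT (fun nu : mon => nu kk) nu Hnu).
Qed.

Lemma dickson (P : mon -> Prop) :
  exists s : seq mon, (forall x, x \in s -> P x) /\
    forall mu, P mu -> exists2 nu, nu \in s & (nu <= mu)%MM.
Proof.
have [s [Hs Hd]] := dickson_k n P; exists s; split => // mu /Hd [nu Hnu H].
by exists nu => //; apply/mnm_lepP => i; apply: H.
Qed.

End Dickson.
Section Existence.
Variables (n : nat) (K : fieldType).
Local Notation A := {mpoly K[n]}.
Local Notation mon := 'X_{1..n}.
Variable ord : rel mon.
Hypothesis Hord : monomial_order ord.
Variable I : A -> Prop.
Hypothesis HI : is_ideal I.

Local Notation T := (LMset ord I).

Definition stdp (r : A) := forall m, m \in msupp r -> ~ T m.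
Definition HasNF (p : A) := exists r, I (p - r) /\ stdp r.

Lemma stdp0 : stdp 0. Proof. by move=> m; rewrite msupp0. Qed.

Lemma HasNF_I p : I p -> HasNF p.
Proof. by move=> Hp; exists 0; rewrite subr0; split => //; apply: stdp0. Qed.

Lemma HasNFD p q : HasNF p -> HasNF q -> HasNF (p + q).
Proof.
move=> [r [Hr Sr]] [s [Hs Ss]]; exists (r + s); split.
- have -> : p + q - (r + s) = (p - r) + (q - s) by rewrite opprD addrACA.
  by case: HI => _ HD _; apply: HD.
- by move=> m /msuppD_le; rewrite mem_cat => /orP [/Sr|/Ss].
Qed.

Lemma HasNFZ c p : HasNF p -> HasNF (c *: p).
Proof.
move=> [r [Hr Sr]]; exists (c *: r); split.
- by rewrite -scalerBr; apply: idealZ.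
- by move=> m /msuppZ_le /Sr.
Qed.

Lemma HasNF_mons p : (forall m, m \in msupp p -> HasNF 'X_[m]) -> HasNF p.
Proof.
move=> H; rewrite (mpolyE p).
elim: (msupp p) H => [|x s IH] H; first by rewrite big_nil; apply: HasNF_I; case: HI.
rewrite big_cons; apply: HasNFD; first by apply: HasNFZ; apply: H; rewrite inE eqxx.
by apply: IH => m Hm; apply: H; rewrite inE Hm orbT.
Qed.

Lemma wf_ind_ord (P : mon -> Prop) :
  (forall mu, (forall nu, nu != mu -> ord nu mu -> P nu) -> P mu) -> forall mu, P mu.
Proof.
move=> H mu; elim: (ord_wf Hord mu) => {}mu _ IH; apply: H => nu H1 H2.
by apply: IH; rewrite H1.
Qed.

Lemma NF_mon mu : HasNF 'X_[mu].
Proof.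
elim/wf_ind_ord: mu => mu IH.
have below : forall p, (forall m, m \in msupp p -> m != mu /\ ord m mu) -> HasNF p.
  move=> p Hp; apply: HasNF_mons => m /Hp [H1 H2]; exact: IH.
case: (classic (T mu)) => Tmu; last first.
  exists 'X_[mu]; rewrite subrr; split; first by case: HI.
  by move=> m; rewrite msuppX inE => /eqP ->.
have [f [Hf Hf0 HL]] := Tmu.
have Hc := LM_coef HL.
have -> : 'X_[mu] = (f@_mu)^-1 *: f + ('X_[mu] - (f@_mu)^-1 *: f) by rewrite addrC subrK.
apply: HasNFD; first by apply: HasNF_I; apply: idealZ.
apply: below => m Hm; split.
- apply/negP => /eqP E; move: Hm; rewrite E mcoeff_msupp mcoeffB mcoeffZ mcoeffX eqxx.
  by rewrite mulVf // subrr eqxx.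
- move: Hm => /msuppB_le; rewrite mem_cat msuppX inE => /orP [/eqP ->|/msuppZ_le H].
  + exact: ord_refl.
  + by case: HL => _; apply.
Qed.

Lemma NF p : HasNF p.
Proof. by apply: HasNF_mons => m _; exact: NF_mon. Qed.

Definition Spec (mu : mon) (g : A) :=
  [/\ I g, is_LM ord g mu, g@_mu = 1 & forall m, m \in msupp g -> m != mu -> ~ T m].

Lemma Spec_uniq mu g1 g2 : Spec mu g1 -> Spec mu g2 -> g1 = g2.
Proof.
move=> [I1 L1 C1 S1] [I2 L2 C2 S2].
case: (eqVneq (g1 - g2) 0) => [/eqP|Hd]; first by rewrite subr_eq0 => /eqP.
exfalso.
have [m Hm] := LM_exists Hord Hd.
have Tm : T m by exists (g1 - g2); split => //; apply: idealB.
have Hmd := proj1 Hm.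
have Hmmu : m != mu.
  apply/negP => /eqP E; move: Hmd; rewrite E mcoeff_msupp mcoeffB C1 C2 subrr.
  by rewrite eqxx.
move: Hmd => /msuppB_le; rewrite mem_cat => /orP [H|H].
- exact: (S1 _ H Hmmu).
- exact: (S2 _ H Hmmu).
Qed.

Lemma Spec_exists mu : T mu -> exists g, Spec mu g.
Proof.
move=> Tmu; have [r [Hr Sr]] := NF_mon mu.
have Hr_mu : r@_mu = 0.
  by apply/eqP; rewrite mcoeff_eq0; apply/negP => /Sr.
have Hg0 : 'X_[mu] - r != 0.
  apply/negP => /eqP E; have := congr1 (mcoeff mu) E.
  by rewrite mcoeffB mcoeffX eqxx Hr_mu subr0 mcoeff0 => /eqP; rewrite oner_eq0.
have supp_g : forall m, m \in msupp ('X_[mu] - r) -> m != mu -> ~ T m.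
  move=> m /msuppB_le; rewrite mem_cat msuppX inE => /orP [/eqP ->|/Sr //].
  by rewrite eqxx.
exists ('X_[mu] - r); split => //.
- have [m Hm] := LM_exists Hord Hg0.
  have Tm : T m by exists ('X_[mu] - r).
  case: (eqVneq m mu) => [E|Hne]; first by move: Hm; rewrite E.
  by exfalso; exact: (supp_g m (proj1 Hm) Hne Tm).
- by rewrite mcoeffB mcoeffX eqxx Hr_mu subr0.
Qed.

Lemma wf_min (P : mon -> Prop) x : P x ->
  exists y, P y /\ forall z, P z -> z != y -> ~~ ord z y.
Proof.
elim/wf_ind_ord: x => x IH Px.
case: (classic (exists z, [/\ P z, z != x & ord z x])) => [[z [Pz H1 H2]]|H].
- exact: IH H1 H2 Pz.
- exists x; split => // z Pz Hzx; apply/negP => Hzo; apply: H; by exists z.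
Qed.

Lemma seq_choice (X Y : eqType) (R : X -> Y -> Prop) (l : seq X) :
  (forall x, x \in l -> exists y, R x y) ->
  exists G : seq Y, (forall y, y \in G -> exists2 x, x \in l & R x y) /\
                    (forall x, x \in l -> exists2 y, y \in G & R x y).
Proof.
elim: l => [|x l IH] H; first by exists [::]; split.
have [y Hy] := H x (mem_head _ _).
have [G [H1 H2]] := IH (fun x' Hx' => H x' (@mem_behead _ (x :: l) x' Hx')).
exists (y :: G); split.
- move=> y'; rewrite inE => /orP [/eqP ->|/H1 [x' Hx' R']].
  + by exists x; rewrite ?mem_head.
  + by exists x' => //; rewrite inE Hx' orbT.
- move=> x'; rewrite inE => /orP [/eqP ->|/H2 [y' Hy' R']].
  + by exists y; rewrite ?mem_head.
  + by exists y' => //; rewrite inE Hy' orbT.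
Qed.

Lemma reduced_exists : exists G : seq A,
  [/\ is_reduced_groebner ord I G,
      (forall g, g \in G -> exists mu, Spec mu g) &
      (forall mu, T mu -> exists g nu, [/\ g \in G, Spec nu g & (nu <= mu)%MM])].
Proof.
have [s [Hs Hcov]] := dickson T.
pose s' := [seq mu <- s | ~~ has (fun nu => (nu != mu) && (nu <= mu)%MM) s].
have Hs' : forall mu, mu \in s' -> T mu /\ forall nu, nu \in s -> nu != mu -> ~~ (nu <= mu)%MM.
  move=> mu; rewrite mem_filter => /andP [/hasPn Hh /Hs Tmu]; split => // nu Hnu Hne.
  by have := Hh nu Hnu; rewrite Hne.
have Hcov' : forall mu, T mu -> exists2 nu, nu \in s' & (nu <= mu)%MM.
  move=> mu Tmu; have [nu0 Hnu0 Hd0] := Hcov mu Tmu.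
  have [y [[Hy Hyd] Hmin]] := @wf_min (fun y => y \in s /\ (y <= mu)%MM) nu0 (conj Hnu0 Hd0).
  exists y => //; rewrite mem_filter Hy andbT; apply/hasPn => z Hz.
  apply/negP => /andP [Hzy Hzd].
  have := Hmin z (conj Hz (lepm_trans Hzd Hyd)) Hzy; rewrite (ord_div Hord Hzd).
  by [].
have [G [HG1 HG2]] := @seq_choice _ _ Spec s' (fun mu Hmu => Spec_exists (proj1 (Hs' mu Hmu))).
exists G; split.
- split.
  + split; first by move=> g /HG1 [mu _ []].
    move=> p; split.
    * apply: ideal_gen_min; first exact: ideal_gen_ideal.
      move=> q [f [m [Hf Hf0 HL ->]]].
      have Tm : T m by exists f.
      have [nu Hnu Hd] := Hcov' m Tm.
      have [g Hg [Ig Lg Cg Sg]] := HG2 nu Hnu.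
      rewrite -(submK Hd) mpolyXD; apply: ideal_gen_mul; exists g, nu; split => //.
      by apply/negP => /eqP E; move: Cg; rewrite E mcoeff0 => /eqP; rewrite eq_sym oner_eq0.
    * apply: ideal_gen_min; first exact: ideal_gen_ideal.
      move=> q [g [m [Hg Hg0 HL ->]]]; apply: ideal_gen_sub; exists g, m; split => //.
      by have [mu _ []] := HG1 g Hg.
  + move=> g /HG1 [mu _ [Ig Lg Cg Sg]]; by exists mu.
  + move=> g g' m m' Hg Hg' Hne HL' Hm.
    have [mu Hmu [Ig Lg Cg Sg]] := HG1 g Hg.
    have [mu' Hmu' [Ig' Lg' Cg' Sg']] := HG1 g' Hg'.
    have E' : m' = mu' := LM_uniq Hord HL' Lg'.
    subst m'; apply/negP => /mdividesP Hd.
    case: (eqVneq m mu) => [Em|Hmne]; last first.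
      apply: (Sg m Hm Hmne); apply: (LMset_mul Hord HI _ Hd).
      exists g'; split => //; apply/negP => /eqP E; move: Cg'; rewrite E mcoeff0.
      by move/eqP; rewrite eq_sym oner_eq0.
    subst m; case: (eqVneq mu' mu) => [Ee|Hne'].
    * subst mu'; move: Hne; rewrite (Spec_uniq (And4 Ig Lg Cg Sg) (And4 Ig' Lg' Cg' Sg')).
      by rewrite eqxx.
    * have [_ H] := Hs' mu Hmu.
      have Hmu's : mu' \in s by move: Hmu'; rewrite mem_filter => /andP [].
      by move: (H mu' Hmu's Hne'); rewrite Hd.
- by move=> g /HG1 [mu _ H]; exists mu.
- move=> mu Tmu; have [nu Hnu Hd] := Hcov' mu Tmu.
  have [g Hg Sg] := HG2 nu Hnu; by exists g, nu.
Qed.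

End Existence.
Section WeightOrder.
Variables (n : nat) (R : realType).
Local Notation mon := 'X_{1..n}.
Variable w : 'I_n -> R.

Lemma wdotD (a b : mon) : wdot w (a + b)%MM = wdot w a + wdot w b.
Proof.
rewrite /wdot -big_split /=; apply: eq_bigr => i _.
by rewrite mnmDE natrD mulrDr.
Qed.

Definition ordw : rel mon := fun a b =>
  (mdeg a < mdeg b)%N || ((mdeg a == mdeg b) &&
    ((wdot w a < wdot w b) || ((wdot w a == wdot w b) && (a <= b)%O))).

Lemma ordw_mdeg a b : ordw a b -> (mdeg a <= mdeg b)%N.
Proof. by case/orP => [/ltnW //|/andP [/eqP -> _]]. Qed.

Lemma ordw_wdot a b : ordw a b -> mdeg a = mdeg b -> wdot w a <= wdot w b.
Proof.
case/orP => [H E|/andP [_ /orP [/ltW //|/andP [/eqP -> _]]]]; last by [].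
by move: H; rewrite E ltnn.
Qed.

Lemma ordw_refl : reflexive ordw.
Proof. by move=> a; rewrite /ordw !eqxx lexx /= orbT orbT. Qed.

Lemma ordw_anti : antisymmetric ordw.
Proof.
move=> a b /andP [/orP [H1|/andP [/eqP E1 H1]] /orP [H2|/andP [/eqP E2 H2]]].
+ by move: (ltn_trans H1 H2); rewrite ltnn.
+ by move: H1; rewrite E2 ltnn.
+ by move: H2; rewrite E1 ltnn.
+ move: H1 H2 => /orP [H1|/andP [/eqP F1 H1]] /orP [H2|/andP [/eqP F2 H2]].
  * by move: (lt_trans H1 H2); rewrite ltxx.
  * by move: H1; rewrite F2 ltxx.
  * by move: H2; rewrite F1 ltxx.
  * by apply: le_anti; rewrite H1 H2.
Qed.

Lemma ordw_trans : transitive ordw.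
Proof.
move=> b a c /orP [H1|/andP [/eqP E1 H1]] /orP [H2|/andP [/eqP E2 H2]].
+ by rewrite /ordw (ltn_trans H1 H2).
+ by rewrite /ordw -E2 H1.
+ by rewrite /ordw E1 H2.
+ apply/orP; right; rewrite E1 E2 eqxx /=.
  move: H1 H2 => /orP [H1|/andP [/eqP F1 H1]] /orP [H2|/andP [/eqP F2 H2]].
  * by rewrite (lt_trans H1 H2).
  * by rewrite -F2 H1.
  * by rewrite F1 H2.
  * by rewrite F1 F2 eqxx (le_trans H1 H2) orbT.
Qed.

Lemma ordw_total : total ordw.
Proof.
move=> a b; rewrite /ordw; case: (ltngtP (mdeg a) (mdeg b)) => //= E.
rewrite eq_sym; case: (ltgtP (wdot w a) (wdot w b)) => //= F.
by rewrite le_total.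
Qed.

Lemma ordw_add m1 m2 m : ordw m1 m2 -> ordw (m1 + m)%MM (m2 + m)%MM.
Proof.
move=> /orP [H|/andP [/eqP E H]].
+ by rewrite /ordw !mdegD ltn_add2r H.
+ apply/orP; right; rewrite !mdegD E eqxx /= !wdotD ltrD2r.
  by rewrite (inj_eq (addIr _)) lemc_add2l.
Qed.

Lemma ordw_wf : well_founded (fun a b => (a != b) && ordw a b).
Proof.
pose S := fun a b : mon => (a != b) && ordw a b.
have Str : forall x y z, S x y -> S y z -> S x z.
  move=> x y z /andP [Hxy Oxy] /andP [Hyz Oyz]; apply/andP; split.
  + apply/negP => /eqP Exz; subst z.
    by move: Hxy; rewrite (@ordw_anti x y) ?eqxx // Oxy Oyz.
  + exact: ordw_trans Oxy Oyz.
move=> a0; pose D := (mdeg a0).+1.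
have key : forall k (a : mon) (Ha : (mdeg a < D)%N),
    (#|[set x : 'X_{1..n < D} | S (val x) a]| <= k)%N -> Acc S a.
  elim=> [|k IH] a Ha Hc; constructor => y Hy.
  - have Hyd : (mdeg y < D)%N by apply: leq_ltn_trans (ordw_mdeg (proj2 (andP Hy))) Ha.
    move: Hc; rewrite leqn0 cards_eq0 => /eqP /setP /(_ (BMultinom Hyd)).
    by rewrite inE in_set0 /= Hy.
  - have Hyd : (mdeg y < D)%N by apply: leq_ltn_trans (ordw_mdeg (proj2 (andP Hy))) Ha.
    apply: (IH y Hyd); rewrite -ltnS; apply: leq_trans Hc.
    apply: proper_card; apply/properP; split.
    + by apply/subsetP => x; rewrite !inE => H; apply: Str H Hy.
    + exists (BMultinom Hyd); rewrite !inE /=; [exact: Hy | by rewrite /S eqxx].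
by apply: (key _ a0 (ltnSn _) (leqnn _)).
Qed.

Lemma ordw_mo : monomial_order ordw.
Proof.
split; first by split; [exact: ordw_refl|exact: ordw_anti|exact: ordw_trans|exact: ordw_total].
split; [exact: ordw_add|exact: ordw_wf].
Qed.

End WeightOrder.
Section Weights.
Variables (n : nat) (K : fieldType) (R : realType).
Local Notation A := {mpoly K[n]}.
Local Notation mon := 'X_{1..n}.
Variable w : 'I_n -> R.

Definition Pc (c : R) (f : A) := filt (fun m => wdot w m == c) f.
Definition Bnd (f : A) (c : R) := forall m, m \in msupp f -> wdot w m <= c.

Lemma init_wE (f : A) m :
  (init_w w f)@_m = if all (fun m' => wdot w m' <= wdot w m) (msupp f) then f@_m else 0.
Proof. exact: (filtE (fun m => all (fun m' => wdot w m' <= wdot w m) (msupp f))). Qed.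

Lemma init_w_P (f : A) c m0 : Bnd f c -> m0 \in msupp f -> wdot w m0 = c ->
  init_w w f = Pc c f.
Proof.
move=> HB Hm0 Ec; apply/mpolyP => m; rewrite init_wE /Pc filtE.
case: (boolP (m \in msupp f)) => Hm; last by rewrite (memN_msupp_eq0 Hm); case: ifP; case: ifP.
case: (eqVneq (wdot w m) c) => E.
- by rewrite ifT //; apply/allP => m' /HB; rewrite E.
- rewrite ifF //; apply/negP => /allP /(_ _ Hm0); rewrite Ec => Hc.
  by move: E; rewrite eq_le HB // Hc.
Qed.

Lemma seq_wmax (s : seq mon) : s != [::] ->
  exists2 m0, m0 \in s & forall m, m \in s -> wdot w m <= wdot w m0.
Proof.
elim: s => [//|x s IH] _.
case: (eqVneq s [::]) => [->|Hs].
  by exists x; rewrite ?mem_head // => m; rewrite inE => /eqP ->.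
have [m0 Hm0 Hc] := IH Hs.
case: (leP (wdot w x) (wdot w m0)) => Hxc.
- exists m0; first by rewrite inE Hm0 orbT.
  by move=> m; rewrite inE => /orP [/eqP ->|/Hc].
- exists x; first by rewrite mem_head.
  move=> m; rewrite inE => /orP [/eqP ->|/Hc H] //.
  exact: le_trans H (ltW Hxc).
Qed.

Lemma top_exists (f : A) : f != 0 -> exists2 c, Bnd f c & exists2 m0, m0 \in msupp f & wdot w m0 = c.
Proof.
rewrite -msupp_eq0 => /seq_wmax [m0 Hm0 H].
by exists (wdot w m0) => //; exists m0.
Qed.

Lemma mcoeffMX_out (p : A) a m : ~~ (a <= m)%MM -> (p * 'X_[a])@_m = 0.
Proof.
move=> H; apply: memN_msupp_eq0; rewrite (perm_mem (msuppMX _ _)).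
apply/mapP => [[k _ Ek]]; move: H; rewrite Ek lem_addr.
by [].
Qed.

Lemma filt_MX (P : pred mon) (f : A) a :
  filt P (f * 'X_[a]) = filt (fun k => P (a + k)%MM) f * 'X_[a].
Proof.
apply/mpolyP => m; rewrite filtE.
case: (boolP (a <= m)%MM) => H; last by rewrite !mcoeffMX_out //; case: ifP.
rewrite -(submK H) addmC !mcoeffMX filtE.
by case: ifP.
Qed.

Lemma filt_msupp (P : pred mon) (f : A) m : m \in msupp (filt P f) -> m \in msupp f.
Proof. by rewrite msupp_filt => /andP []. Qed.

Lemma init_w0 : init_w w (0 : A) = 0.
Proof. by apply/mpolyP => m; rewrite init_wE mcoeff0; case: ifP. Qed.

Lemma init_w_MX (f : A) a : init_w w (f * 'X_[a]) = init_w w f * 'X_[a].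
Proof.
case: (eqVneq f 0) => [->|Hf]; first by rewrite mul0r init_w0 mul0r.
have [c Hc [m0 Hm0 E0]] := top_exists Hf.
rewrite (init_w_P Hc Hm0 E0) (@init_w_P _ (c + wdot w a) (a + m0)%MM).
- by rewrite /Pc filt_MX; congr (_ * _); apply: eq_filt_P => k; rewrite wdotD addrC (inj_eq (addIr _)).
- move=> m; rewrite (perm_mem (msuppMX _ _)) => /mapP [k Hk ->].
  by rewrite wdotD addrC lerD2r; apply: Hc.
- by rewrite (perm_mem (msuppMX _ _)); apply/mapP; exists m0.
- by rewrite wdotD addrC E0.
Qed.

End Weights.
Section Homog.
Variables (n : nat) (K : fieldType) (R : realType).
Local Notation A := {mpoly K[n]}.
Local Notation mon := 'X_{1..n}.
Variable w : 'I_n -> R.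
Local Notation ow := (ordw w).
Local Notation Hord := (ordw_mo w).
Variable J : A -> Prop.
Hypothesis HJ : is_homogeneous_ideal J.
Let HJi : is_ideal J := proj1 HJ.

Lemma spec_homog mu g : Spec ow J mu g -> forall m, m \in msupp g -> mdeg m = mdeg mu.
Proof.
move=> Sg; have [Ig Lg Cg Sg'] := Sg.
pose g' := hcomp (mdeg mu) g.
have Sg2 : Spec ow J mu g'.
  split.
  - by apply: (proj2 HJ).
  - split; first by rewrite mcoeff_msupp hcompE eqxx Cg oner_eq0.
    move=> m'; rewrite mcoeff_msupp hcompE; case: ifP; last by rewrite eqxx.
    by move=> _; rewrite -mcoeff_msupp; case: Lg => _; apply.
  - by rewrite hcompE eqxx.
  - move=> m'; rewrite mcoeff_msupp hcompE; case: ifP; last by rewrite eqxx.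
    by move=> _; rewrite -mcoeff_msupp; apply: Sg'.
have E := Spec_uniq Hord HJi Sg Sg2.
move=> m; rewrite E mcoeff_msupp hcompE; case: ifP => [/eqP //|]; by rewrite eqxx.
Qed.

Variable G : seq A.
Hypothesis HG2 : forall g, g \in G -> exists mu, Spec ow J mu g.
Hypothesis HG3 : forall mu, LMset ow J mu ->
  exists g nu, [/\ g \in G, Spec ow J nu g & (nu <= mu)%MM].

Local Notation N := (ideal_gen (fun p => exists2 h, h \in G & p = init_w w h)).

Lemma N_ideal : is_ideal N. Proof. exact: ideal_gen_ideal. Qed.

Lemma F3_homog mu : forall f c, J f -> is_LM ow f mu ->
  (forall m, m \in msupp f -> mdeg m = mdeg mu) -> Bnd w f c -> N (Pc w c f).
Proof.
elim/(wf_ind_ord Hord): mu => mu IH f c Jf Lf Hh Hb.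
have Hmu := proj1 Lf.
have Hwle : forall m, m \in msupp f -> wdot w m <= wdot w mu.
  move=> m Hm; apply: ordw_wdot; first by case: Lf => _; apply.
  exact: Hh.
case: (ltP (wdot w mu) c) => Hlt.
  have -> : Pc w c f = 0.
    apply/mpolyP => m; rewrite /Pc filtE mcoeff0; case: (boolP (m \in msupp f)) => Hm.
    - by rewrite ifF //; apply/negP => /eqP E; move: (Hwle m Hm); rewrite E leNgt Hlt.
    - by rewrite memN_msupp_eq0 //; case: ifP.
  by case: N_ideal.
have Ec : wdot w mu = c by apply/eqP; rewrite eq_le Hlt Hb.
have Tmu : LMset ow J mu.
  exists f; split => //; apply/negP => /eqP E; move: Hmu; rewrite E msupp0.
  by [].
have [h [nu [Hh_in Sh Hd]]] := HG3 Tmu.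
have [Ih Lh Ch Sh'] := Sh.
have Hhh := spec_homog Sh.
pose a := (mu - nu)%MM.
have Ea : (a + nu)%MM = mu by rewrite addmC /a addmC submK.
pose f' := f - f@_mu *: (h * 'X_[a]).
have Jf' : J f'.
  apply: idealB => //; apply: idealZ => //; case: HJi => _ _ HM; rewrite mulrC.
  exact: HM.
have suppX : forall m, m \in msupp (h * 'X_[a]) ->
    [/\ mdeg m = mdeg mu, wdot w m <= c & ow m mu].
  move=> m; rewrite (perm_mem (msuppMX _ _)) => /mapP [k Hk ->].
  have Hkd := Hhh _ Hk.
  have Hko : ow k nu by case: Lh => _; apply.
  split.
  - by rewrite mdegD Hkd -mdegD Ea.
  - rewrite wdotD -Ec -Ea wdotD lerD2l; exact: ordw_wdot Hko Hkd.
  - by rewrite -Ea; apply: (ord_addl Hord) Hko.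
have supp_f' : forall m, m \in msupp f' ->
    [/\ mdeg m = mdeg mu, wdot w m <= c, ow m mu & m != mu].
  move=> m Hm; have Hne : m != mu.
    apply/negP => /eqP E; move: Hm; rewrite E mcoeff_msupp mcoeffB mcoeffZ.
    by rewrite -Ea mcoeffMX Ch mulr1 subrr eqxx.
  move: Hm => /msuppB_le; rewrite mem_cat => /orP [Hm|/msuppZ_le Hm].
  + by split => //; [exact: Hh | exact: Hb | case: Lf => _; apply].
  + by have [] := suppX m Hm.
have -> : Pc w c f = Pc w c f' + f@_mu *: Pc w c (h * 'X_[a]).
  by rewrite /Pc -filtZ -filtD /f' subrK.
case: N_ideal => _ ND NM; apply: (ND).
- case: (eqVneq f' 0) => [->|Hf0].
    by rewrite /Pc filt0; case: N_ideal.
  have [mu' Lf'] := LM_exists Hord Hf0.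
  have [H1 H2 H3 H4] := supp_f' _ (proj1 Lf').
  apply: (IH mu' _ _ f' c) => //.
  + by move=> m Hm; have [-> _ _ _] := supp_f' _ Hm.
  + by move=> m Hm; have [] := supp_f' _ Hm.
- rewrite -mul_mpolyC; apply: (NM).
  have -> : Pc w c (h * 'X_[a]) = init_w w h * 'X_[a].
    have Einit : init_w w h = Pc w (wdot w nu) h.
      apply: (init_w_P (m0 := nu)) => //; last exact: proj1 Lh.
      move=> m Hm; apply: ordw_wdot; first by case: Lh => _; apply.
      exact: Hhh.
    rewrite Einit /Pc filt_MX; congr (_ * _); apply: eq_filt_P => k.
    by rewrite wdotD -Ec -Ea wdotD (inj_eq (addrI _)).
  rewrite mulrC; apply: (NM); apply: ideal_gen_sub; by exists h.
Qed.

Lemma hcomp_sum (f : A) : f = \sum_(d < msize f) hcomp d f.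
Proof.
apply/mpolyP => m; rewrite raddf_sum /=.
under eq_bigr do rewrite hcompE.
case: (boolP (m \in msupp f)) => Hm; last first.
  rewrite memN_msupp_eq0 // big1 // => i _; by case: ifP.
have Hd := msize_mdeg_lt Hm.
rewrite (bigD1 (Ordinal Hd)) //= eqxx big1 ?addr0 // => i Hi.
rewrite ifF //; apply/negP => /eqP E; move: Hi; rewrite -val_eqE /= E eqxx.
by [].
Qed.

Lemma F3 f : J f -> N (init_w w f).
Proof.
move=> Jf; case: (eqVneq f 0) => [->|Hf]; first by rewrite init_w0; case: N_ideal.
have [c Hc [m0 Hm0 E0]] := top_exists w Hf.
rewrite (init_w_P Hc Hm0 E0) (hcomp_sum f) /Pc filt_sum.
apply: ideal_sum; first exact: N_ideal.
move=> d _; set g := hcomp d f.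
have Jg : J g by apply: (proj2 HJ).
case: (eqVneq g 0) => [->|Hg]; first by rewrite filt0; case: N_ideal.
have [mu Lg] := LM_exists Hord Hg.
apply: (F3_homog (mu := mu)) => //.
- move=> m Hm; have := proj1 Lg; rewrite !mcoeff_msupp !hcompE.
  move: Hm; rewrite mcoeff_msupp hcompE.
  by case: ifP => [/eqP ->|]; [case: ifP => [/eqP ->|]|]; rewrite ?eqxx.
- by move=> m Hm; apply: Hc; apply: filt_msupp Hm.
Qed.

End Homog.
Section DLemma.
Variables (n : nat) (K : fieldType) (R : realType).
Local Notation A := {mpoly K[n]}.
Local Notation mon := 'X_{1..n}.
Variable w : 'I_n -> R.
Local Notation ow := (ordw w).
Local Notation Hord := (ordw_mo w).
Variable I : A -> Prop.
Hypothesis HI : is_homogeneous_ideal I.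
Let HIi : is_ideal I := proj1 HI.

Variables (d : nat) (c : R).
Definition Qp (p : A) := filt (fun m => (mdeg m == d) && (wdot w m == c)) p.
Definition Claim (p : A) := exists F, [/\ I F,
  (forall m, m \in msupp F -> mdeg m = d /\ wdot w m <= c) & Qp p = Pc w c F].

Lemma Claim0 : Claim 0.
Proof. by exists 0; split; [case: HIi | move=> m; rewrite msupp0 | rewrite /Qp /Pc !filt0]. Qed.

Lemma ClaimD p q : Claim p -> Claim q -> Claim (p + q).
Proof.
move=> [F1 [I1 S1 E1]] [F2 [I2 S2 E2]]; exists (F1 + F2); split.
- by case: HIi => _ HD _; apply: HD.
- by move=> m /msuppD_le; rewrite mem_cat => /orP [/S1|/S2].
- by rewrite /Qp /Pc !filtD -/(Qp p) -/(Qp q) E1 E2.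
Qed.

Lemma ClaimZ k p : Claim p -> Claim (k *: p).
Proof.
move=> [F [IF SF EF]]; exists (k *: F); split.
- exact: idealZ.
- by move=> m /msuppZ_le /SF.
- by rewrite /Qp /Pc !filtZ -/(Qp p) EF.
Qed.

Lemma Claim_sum (T : eqType) (s : seq T) (G : T -> A) :
  (forall x, x \in s -> Claim (G x)) -> Claim (\sum_(x <- s) G x).
Proof.
elim: s => [|x s IH] H; first by rewrite big_nil; exact: Claim0.
rewrite big_cons; apply: ClaimD; first by apply: H; rewrite mem_head.
by apply: IH => y Hy; apply: H; rewrite inE Hy orbT.
Qed.

Lemma Claim_init g : I g -> Claim (init_w w g).
Proof.
move=> Ig; case: (eqVneq g 0) => [->|Hg]; first by rewrite init_w0; exact: Claim0.
have [c' Hc [m0 Hm0 E0]] := top_exists w Hg.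
rewrite (init_w_P Hc Hm0 E0).
case: (eqVneq c' c) => [Ec|Hne].
- exists (hcomp d g); split.
  + exact: (proj2 HI).
  + move=> m Hm; split.
    * by move: Hm; rewrite mcoeff_msupp hcompE; case: ifP => [/eqP //|]; rewrite eqxx.
    * rewrite -Ec; apply: Hc; exact: filt_msupp Hm.
  + apply/mpolyP => m; rewrite /Qp /Pc !filtE Ec.
    by case: (mdeg m == d); case: (wdot w m == c).
- exists 0; split; [by case: HIi | by move=> m; rewrite msupp0 |].
  apply/mpolyP => m; rewrite /Qp /Pc !filtE mcoeff0.
  case: (mdeg m == d); case: (eqVneq (wdot w m) c) => //= E.
  by rewrite ifF //; apply/negP => /eqP E'; move: Hne; rewrite -E' E eqxx.
Qed.

Lemma Claim_mul a f : I f -> Claim (a * init_w w f).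
Proof.
move=> If; rewrite (mpolyE a) mulr_suml.
apply: Claim_sum => m _.
rewrite -scalerAl mulrC -init_w_MX; apply: ClaimZ; apply: Claim_init.
by rewrite mulrC; case: HIi => _ _; apply.
Qed.

Lemma Claim_gen r : init_ideal_w w I r -> Claim r.
Proof.
move=> [s [Hs ->]]; apply: Claim_sum => x /Hs [f [If ->]].
exact: Claim_mul.
Qed.

End DLemma.

Lemma D_lemma n (K : fieldType) (R : realType) (w : 'I_n -> R) (I : {mpoly K[n]} -> Prop) r mu :
  is_homogeneous_ideal I -> init_ideal_w w I r -> r != 0 -> is_LM (ordw w) r mu ->
  LMset (ordw w) I mu.
Proof.
move=> HI Hr Hr0 Lr.
have [F [IF SF EF]] := Claim_gen HI (mdeg mu) (wdot w mu) Hr.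
have coefF : forall m, mdeg m = mdeg mu -> wdot w m = wdot w mu -> F@_m = r@_m.
  move=> m E1 E2; have := congr1 (mcoeff m) EF.
  by rewrite /Qp /Pc !filtE E1 E2 !eqxx.
have Fmu : mu \in msupp F.
  by rewrite mcoeff_msupp coefF // -mcoeff_msupp; case: Lr.
exists F; split => //.
- by apply/negP => /eqP E; move: Fmu; rewrite E msupp0.
- split => // m Hm; have [Hd Hw] := SF m Hm.
  case: (ltrP (wdot w m) (wdot w mu)) => Hlt.
  + by rewrite /ordw Hd eqxx Hlt ltnn.
  + have Ew : wdot w m = wdot w mu by apply/eqP; rewrite eq_le Hw Hlt.
    case: Lr => _; apply; rewrite mcoeff_msupp -coefF // -mcoeff_msupp //.
Qed.
Section Main.
Variables (n : nat) (K : fieldType) (R : realType).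
Local Notation A := {mpoly K[n]}.
Local Notation mon := 'X_{1..n}.

Lemma cUGB_in (I : A -> Prop) f : in_cUGB I f -> I f.
Proof. by move=> [ord [G [_ [[HG _] _ _] Hf]]]; apply: HG. Qed.

Lemma init_w_transfer (w w' : 'I_n -> R) (g h : A) :
  msupp g =i msupp h -> init_w w g = init_w w' g -> init_w w h = init_w w' h.
Proof.
move=> Es E; apply/mpolyP => m; rewrite !init_wE.
case: (boolP (m \in msupp h)) => Hm; last by rewrite memN_msupp_eq0 //; case: ifP; case: ifP.
have := congr1 (mcoeff m) E; rewrite !init_wE (eq_all_r Es).
rewrite (eq_all_r Es).
have : g@_m != 0 by rewrite -mcoeff_msupp Es.
case: ifP; case: ifP => // _ _ Hg; [move=> E0 | move=> /esym E0]; by move: Hg; rewrite E0 eqxx.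
Qed.

Lemma main_incl (I J : A -> Prop) (w w' : 'I_n -> R) :
  is_homogeneous_ideal I -> is_homogeneous_ideal J ->
  same_supports (in_cUGB I) (in_cUGB J) ->
  (forall p, init_ideal_w w' I p -> init_ideal_w w I p) ->
  forall p, init_ideal_w w J p -> init_ideal_w w' J p.
Proof.
move=> HI HJ [SS1 SS2] Hincl.
have Hord := ordw_mo w.
have [GJ [RJ HJ2 HJ3]] := reduced_exists Hord (proj1 HJ).
have [GI [RI HI2 HI3]] := reduced_exists Hord (proj1 HI).
move=> p Hp.
have Hgen : forall q, (exists f, J f /\ q = init_w w f) ->
    ideal_gen (fun p0 => exists2 h, h \in GJ & p0 = init_w w h) q.
  move=> q [f [Jf ->]]; exact (F3 HJ HJ3 Jf).
have HN := ideal_gen_min (N_ideal w GJ) Hgen Hp.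
apply: (ideal_gen_min (ideal_gen_ideal _) _ HN) => q [h Hh ->].
have [nu Sh] := HJ2 h Hh.
have [Ih Lh Ch Sh'] := Sh.
have Hh0 : h != 0 by apply/negP => /eqP E; move: Ch; rewrite E mcoeff0 => /eqP; rewrite eq_sym oner_eq0.
have Uh : in_cUGB J h by exists (ordw w), GJ.
have [g [Ug Hg0 Egh]] := SS2 h Uh Hh0.
have Ig := cUGB_in Ug.
have Lg : is_LM (ordw w) g nu by apply: LM_supp Lh => m; rewrite Egh.
have Hhom : forall m, m \in msupp g -> mdeg m = mdeg nu.
  by move=> m Hm; apply: (spec_homog HJ Sh); rewrite -Egh.
have Bg : Bnd w g (wdot w nu).
  move=> m Hm; apply: ordw_wdot; [by case: Lg => _; apply | exact: Hhom].
have Xl : forall r, init_ideal_w w I r -> r != 0 ->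
    (forall m, m \in msupp r -> m \in msupp g) -> nu \notin msupp r -> False.
  move=> r Hr Hr0 Hsub Hnu.
  have [mu Lr] := LM_exists Hord Hr0.
  have Tmu := D_lemma HI Hr Hr0 Lr.
  have [g' [nu' [Hg' Sg' Hd]]] := HI3 mu Tmu.
  have [Ig' Lg' Cg' _] := Sg'.
  have Hg'0 : g' != 0.
    by apply/negP => /eqP E; move: Cg'; rewrite E mcoeff0 => /eqP; rewrite eq_sym oner_eq0.
  have Ug' : in_cUGB I g' by exists (ordw w), GI.
  have [h' [Uh' Hh'0 Eh']] := SS1 g' Ug' Hg'0.
  have TJnu' : LMset (ordw w) J nu'.
    exists h'; split => //; first exact: cUGB_in Uh'.
    by apply: LM_supp Lg' => m; rewrite Eh'.
  have TJmu := LMset_mul Hord (proj1 HJ) TJnu' Hd.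
  have Hmu := proj1 Lr.
  apply: (Sh' mu); last exact: TJmu.
  - by rewrite -Egh; apply: Hsub.
  - by apply/negP => /eqP E; move: Hnu; rewrite -E Hmu.
have Egw : init_w w g = init_w w' g.
  have Hpp : init_ideal_w w I (init_w w g) by apply: ideal_gen_sub; exists g.
  have Hq : init_ideal_w w I (init_w w' g) by apply: Hincl; apply: ideal_gen_sub; exists g.
  have suppP : forall m, m \in msupp (init_w w g) -> m \in msupp g.
    by move=> m; apply: filt_msupp.
  have suppQ : forall m, m \in msupp (init_w w' g) -> m \in msupp g.
    by move=> m; apply: filt_msupp.
  have Pnu : (init_w w g)@_nu = g@_nu.
    by rewrite init_wE ifT //; apply/allP => m Hm; apply: Bg.
  case: (boolP (nu \in msupp (init_w w' g))) => Hnu.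
  - have Qnu : (init_w w' g)@_nu = g@_nu.
      move: Hnu; rewrite mcoeff_msupp init_wE; case: ifP => //; by rewrite eqxx.
    case: (eqVneq (init_w w g - init_w w' g) 0) => [/eqP|Hr0].
      by rewrite subr_eq0 => /eqP.
    exfalso; apply: (Xl (init_w w g - init_w w' g)).
    + by apply: idealB => //; apply: ideal_gen_ideal.
    + exact: Hr0.
    + by move=> m /msuppB_le; rewrite mem_cat => /orP [/suppP|/suppQ].
    + by rewrite mcoeff_msupp mcoeffB Pnu Qnu subrr eqxx.
  - exfalso; apply: (Xl _ Hq) => //.
    have [c Hc [m0 Hm0 E0]] := top_exists w' Hg0.
    apply/negP => /eqP E; have := congr1 (mcoeff m0) E.
    rewrite init_wE mcoeff0 ifT; first by move/eqP; rewrite mcoeff_eq0 Hm0.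
    by apply/allP => m Hm; rewrite E0; apply: Hc.
rewrite (init_w_transfer Egh Egw); apply: ideal_gen_sub; by exists h.
Qed.

End Main.

Theorem corollary2p10 (R : realType) (n : nat) (K : fieldType)
    (I J : {mpoly K[n]} -> Prop) :
  is_homogeneous_ideal I -> is_homogeneous_ideal J ->
  same_supports (in_cUGB I) (in_cUGB J) ->
  forall w w' : 'I_n -> R,
    same_set (init_ideal_w w I) (init_ideal_w w' I) <->
    same_set (init_ideal_w w J) (init_ideal_w w' J).
Proof.
move=> HI HJ [S1 S2] w w'.
have SS : same_supports (in_cUGB I) (in_cUGB J) by [].
have SS' : same_supports (in_cUGB J) (in_cUGB I) by [].
split => H p; split.
- apply: (main_incl HI HJ SS) => q Hq; exact: (proj2 (H q) Hq).
- apply: (main_incl HI HJ SS) => q Hq; exact: (proj1 (H q) Hq).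
- apply: (main_incl HJ HI SS') => q Hq; exact: (proj2 (H q) Hq).
- apply: (main_incl HJ HI SS') => q Hq; exact: (proj1 (H q) Hq).
Qed.
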